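(* Let $\mathcal D$ be a mesh triplet and $\mu,\lambda$ parameter fields as in the context, and suppose the local coercivity assumption holds with constant $\theta_2>0$. Let $c_K$, $c_{\mathcal D}$, $c_{L^2}$ be constants as in the context. Then (a) if $\Gamma_D$ has positive measure, for all $\boldsymbol u\in\boldsymbol{\mathcal H}_{\mathcal T}$, and (b) if $\Gamma_N=\partial\Omega$, for all $\boldsymbol u\in\boldsymbol{\mathcal H}_{\mathcal T}/\mathfrak R(\Omega)$, $$b_{\mathcal D}\big(\Pi_{FV}\boldsymbol u,\Pi_{\mathcal C}(\Pi_{FV}\boldsymbol u)\big)\ge\Theta\,|\boldsymbol u|_{\mathcal T}^2,$$ where the constant $\Theta$ depends on the mesh triplet $\mathcal D$ but does not scale with $h$, and is bounded below by $$\Theta\ge\frac{\theta_2}{d\,c_{\mathcal D}\,c_K(1+c_{L^2})}\min\Big(2\underline\mu,\ \frac{1}{1+(c_K(1+c_{L^2}))^{-1}}\Big).$$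
   Context: Let $\Omega\subset\mathbb R^d$, $d\in\{2,3\}$, be a bounded connected polygonal domain with $\partial\Omega=\Gamma_D\cup\Gamma_N$; $\mathfrak R(\Omega)=\{\boldsymbol a+\boldsymbol\omega\wedge\boldsymbol x\}$ are the rigid body motions and $\|\cdot\|_{L^2/\mathfrak R(\Omega)}$ the corresponding quotient norm. Lamé parameters: $0<\underline\mu\le\mu\le\bar\mu$ a.e., $\lambda$ bounded and positive; $\mu_K=m_K^{-1}\int_K\mu$, $\lambda_K=m_K^{-1}\int_K\lambda$. Mesh triplet $\mathcal D=(\mathcal T,\mathcal F,\mathcal V)$: cells $K$ (measure $m_K$, center $\boldsymbol x_K$, $K$ star-shaped w.r.t. $\boldsymbol x_K$; $h$ the maximal cell diameter), planar faces $\sigma$ (measure $m_\sigma$), vertices $s$; $\mathcal F_K,\mathcal V_K$ faces/vertices of $K$; $\mathcal T_\sigma$ the one or two cells adjacent to $\sigma$; $\mathcal T_s,\mathcal F_s$ cells/faces adjacent to $s$; in 3D at most three faces meet at a vertex. Subcells $(K,s)$ have volumes $m_K^s$, $\sum_sm_K^s=m_K$; subfaces $(s,\sigma)$ have areas $m_\sigma^s=m_s^\sigma$. $\boldsymbol n_{K,\sigma}$ outward unit normal; $d_{K,\sigma}$ distance from $\boldsymbol x_K$ to $\sigma$. $\mathcal G_\sigma^s$: minimal Gauss rule (points $\boldsymbol x_\beta$, weights $\omega_\beta$) exact for quadratics on subface $(s,\sigma)$. Spaces: $\boldsymbol{\mathcal H}_{\mathcal T}$ piecewise constant vector fields (values $\boldsymbol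 u_K$); $\boldsymbol{\mathcal H}_{\mathcal D}$ collections $(\boldsymbol u_K,\boldsymbol u_{K,s}^{\sigma,\beta})$, $K\in\mathcal T,s\in\mathcal V_K,\sigma\in\mathcal F_K\cap\mathcal F_s,\beta\in\mathcal G_\sigma^s$, zero on faces in $\Gamma_D$; $\boldsymbol{\mathcal H}_{\mathcal C}$ collections $(\boldsymbol u_K,\boldsymbol u_s^\sigma)$, one value per subface, zero on $\Gamma_D$. Jump $[\![\boldsymbol u]\!]_s^{\sigma,\beta}=\boldsymbol u_{R,s}^{\sigma,\beta}-\boldsymbol u_{L,s}^{\sigma,\beta}$ ($\mathcal T_\sigma=\{R,L\}$), zero on boundary faces; averages $\langle\boldsymbol u\rangle_s^\sigma=\frac1{m_s^\sigma}\sum_\beta\omega_\beta\frac{\boldsymbol u_{R,s}^{\sigma,\beta}+\boldsymbol u_{L,s}^{\sigma,\beta}}2$ (one-sided on boundary faces) and $\langle\boldsymbol u\rangle_{K,s}^\sigma=\frac1{m_s^\sigma}\sum_\beta\omega_\beta\boldsymbol u_{K,s}^{\sigma,\beta}$. $\Pi_{\mathcal C}:\boldsymbol{\mathcal H}_{\mathcal D}\to\boldsymbol{\mathcal H}_{\mathcal C}$: $(\Pi_{\mathcal C}\boldsymbol u)_K=\boldsymbol u_K$, $(\Pi_{\mathcal C}\boldsymbol u)_s^\sigma=\langle\boldsymbol u\rangle_s^\sigma$. Semi-norms: $|\boldsymbol u|_{\mathcal T}^2=\sum_K\sum_{\sigma\in\mathcal F_K}\frac{m_\sigma}{d_{K,\sigma}}|\gamma_\sigma\boldsymbol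 u-\boldsymbol u_K|^2$, where $\gamma_\sigma\boldsymbol u=\big(\sum_{K\in\mathcal T_\sigma}\boldsymbol u_K/d_{K,\sigma}\big)/\big(\sum_{K\in\mathcal T_\sigma}d_{K,\sigma}^{-1}\big)$ for $\sigma\not\subset\Gamma_D$ and $\gamma_\sigma\boldsymbol u=\boldsymbol 0$ for $\sigma\subset\Gamma_D$. $|\boldsymbol u|_{\mathcal D}^2=\sum_K\sum_{s\in\mathcal V_K}\sum_{\sigma\in\mathcal F_s\cap\mathcal F_K}\frac{m_K^s}{d_{K,\sigma}^2}\big(|\boldsymbol u_K-\langle\boldsymbol u\rangle_s^\sigma|^2+\frac1{m_s^\sigma}\sum_\beta\omega_\beta|[\![\boldsymbol u]\!]_s^{\sigma,\beta}|^2\big)$. Jump functional $J(\boldsymbol u)=\sum_K\sum_{s\in\mathcal V_K}\sum_{\sigma\in\mathcal F_s\cap\mathcal F_K}\frac{m_K^s}{d_{K,\sigma}^2}\frac1{m_s^\sigma}\sum_\beta\omega_\beta|[\![\boldsymbol u]\!]_s^{\sigma,\beta}|^2$ and local version $J_s$ (only the terms with that $s$). Gradients: $(\widetilde\nabla\boldsymbol v)_K^s=\frac1{m_K^s}\sum_{\sigma\in\mathcal F_K\cap\mathcal F_s}m_\sigma^s(\boldsymbol v_s^\sigma-\boldsymbol v_K)\otimes\boldsymbol n_{K,\sigma}$ for $\boldsymbol v\in\boldsymbol{\mathcal H}_{\mathcal C}$; $(\overline\nabla\boldsymbol u)_K^s=\sum_{\sigma\in\mathcal F_K\cap\mathcal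 F_s}(\langle\boldsymbol u\rangle_{K,s}^\sigma-\boldsymbol u_K)\otimes\boldsymbol g_{K,\sigma}^s$ for $\boldsymbol u\in\boldsymbol{\mathcal H}_{\mathcal D}$, with $\boldsymbol g_{K,\sigma}^s$ uniquely determined by $\boldsymbol I=\sum_\sigma(\langle\boldsymbol x\rangle_{K,s}^\sigma-\boldsymbol x_K)\otimes\boldsymbol g_{K,\sigma}^s$. Symmetric parts $\widetilde\varepsilon,\overline\varepsilon$ and traces $\widetilde{\operatorname{div}},\overline{\operatorname{div}}$. $\Pi_{L^2}\boldsymbol u(\boldsymbol x)=\boldsymbol u_K+(\overline\nabla\boldsymbol u)_K^s(\boldsymbol x-\boldsymbol x_K)$ on subcell $(K,s)$. Bilinear forms: $b_{\mathcal D,s}(\boldsymbol u,\boldsymbol v)=\sum_{K\in\mathcal T_s}m_K^s\big(2\mu_K(\overline\varepsilon\boldsymbol u)_K^s:(\widetilde\varepsilon\boldsymbol v)_K^s+\lambda_K(\overline{\operatorname{div}}\boldsymbol u)_K^s(\widetilde{\operatorname{div}}\boldsymbol v)_K^s\big)$, $b_{\mathcal D}=\sum_sb_{\mathcal D,s}$; $a_{\mathcal D,s}(\boldsymbol u,\boldsymbol w)=\sum_{\sigma\in\mathcal F_s}\frac{\alpha_s^\sigma}{m_s^\sigma}\sum_\beta\omega_\beta[\![\boldsymbol u]\!]\cdot[\![\boldsymbol w]\!]$ with weights in $[\alpha^-,\alpha^+]\subset(0,\infty)$. Local energy $|\boldsymbol u|^2_{b_{\mathcal D,s}}=\sum_{K\in\mathcal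 T_s}m_K^s\big(2\mu_K|(\overline\varepsilon\boldsymbol u)_K^s|^2+\lambda_K((\overline{\operatorname{div}}\boldsymbol u)_K^s)^2\big)$. Extensions: $\Pi_{FV,s}\boldsymbol u_{\mathcal T}$ is the minimizer of $a_{\mathcal D,s}(\boldsymbol w,\boldsymbol w)$ over $\boldsymbol w\in\boldsymbol{\mathcal H}_{\mathcal D}$ with cell values $(\boldsymbol u_{\mathcal T})_K$ on $\mathcal T_s$ (zero elsewhere) and face unknowns only at $s$, subject to $b_{\mathcal D,s}(\boldsymbol w,\boldsymbol v)=0$ for all $\boldsymbol v\in\boldsymbol{\mathcal H}_{\mathcal C}$ with zero cell values and support on subfaces at $s$, and $\boldsymbol w_{K,s}^{\sigma,\beta}=\boldsymbol w_K+(\overline\nabla\boldsymbol w)_K^s(\boldsymbol x_\beta-\boldsymbol x_K)$ for all $K\in\mathcal T_s,\sigma,\beta$ (this minimizer exists and is unique). $\Pi_{FV}\boldsymbol u_{\mathcal T}\in\boldsymbol{\mathcal H}_{\mathcal D}$ has cell values $(\boldsymbol u_{\mathcal T})_K$ and at each vertex $s$ the face unknowns of $\Pi_{FV,s}\boldsymbol u_{\mathcal T}$. Local coercivity assumption: for every $s\in\mathcal V$ there is $\theta_{2,s}\ge\theta_2>0$ with $b_{\mathcal D,s}(\boldsymbol u,\Pi_{\mathcal C}\boldsymbol u)\ge\theta_{2,s}\big(|\boldsymbol u|^2_{b_{\mathcal D,s}}+J_s(\boldsymbol u)\big)$ for all $\boldsymbol u\in\Pi_{FV,s}\boldsymbol{\mathcal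 H}_{\mathcal T}/\mathfrak R(\Omega)$. Constants: $c_K$ is a constant with $\sum_K\sum_{s\in\mathcal V_K}m_K^s|(\overline\nabla\boldsymbol u)_K^s|^2\le c_K\big[\|\Pi_{L^2}\boldsymbol u\|_{L^2}^2+\sum_K\sum_sm_K^s|(\overline\varepsilon\boldsymbol u)_K^s|^2+J(\boldsymbol u)\big]$ for all $\boldsymbol u\in\Pi_{FV}\boldsymbol{\mathcal H}_{\mathcal T}$ (a discrete Korn inequality); $c_{\mathcal D}$ is a constant with $|\boldsymbol u|_{\mathcal D}^2\le c_{\mathcal D}\big(\sum_K\sum_sm_K^s|(\overline\nabla\boldsymbol u)_K^s|^2+J(\boldsymbol u)\big)$ for all $\boldsymbol u\in\boldsymbol{\mathcal H}_{\mathcal D}$; $c_{L^2}$ is a constant with $\|\Pi_{L^2}\boldsymbol u\|^2_{L^2/\mathfrak R(\Omega)}\le c_{L^2}\big(\sum_K\sum_sm_K^s|(\overline\varepsilon\boldsymbol u)_K^s|^2+J(\boldsymbol u)\big)$ for all $\boldsymbol u\in\Pi_{FV}\boldsymbol{\mathcal H}_{\mathcal T}$; all three depend only on mesh regularity, not on $h$. *)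

(* Defs.v *)
From HB Require Import structures.
From mathcomp Require Import all_boot all_order all_algebra.
From mathcomp Require Import all_classical all_reals.
Set Implicit Arguments. Unset Strict Implicit. Unset Printing Implicit Defensive.
Import Order.TTheory GRing.Theory Num.Theory.
Local Open Scope ring_scope.
Local Open Scope classical_set_scope.

(* Mesh triplet D = (T, F, V), described by its combinatorial and geometric   *)
(* data.  Points/vectors of R^d are row vectors.    *)
Record mesh (R : realType) (d : nat) := Mesh {
  cell : finType;
  face : finType;
  vert : finType;
  gpt  : finType;                     (* Gauss points beta (all subfaces) *)
  fc1 : face -> cell;                 (* T_sigma = {fc1 sigma; fc2 sigma} *)
  fc2 : face -> cell;                 (* (equal iff sigma is a boundary face) *)
  fverts : face -> {set vert};
  fdir : face -> bool;                (* sigma is a face contained in Gamma_D *)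
  gp_face : gpt -> face;              (* the subface (s,sigma) carrying beta *)
  gp_vert : gpt -> vert;
  gp_pt : gpt -> 'rV[R]_d;
  gp_w : gpt -> R;
  xK : cell -> 'rV[R]_d;
  mK : cell -> R;
  mS : face -> R;
  mSs : face -> vert -> R;
  mKs : cell -> vert -> R;
  dKS : cell -> face -> R;
  nKS : cell -> face -> 'rV[R]_d;
  mom1 : cell -> vert -> 'rV[R]_d;    (* int_{(K,s)} (x - x_K) dx *)
  mom2 : cell -> vert -> 'M[R]_d;     (* int_{(K,s)} (x - x_K)^T (x - x_K) dx *)
  gKS : cell -> vert -> face -> 'rV[R]_d
}.

Arguments cell {R d} m.
Arguments face {R d} m.
Arguments vert {R d} m.
Arguments gpt {R d} m.
Arguments fc1 {R d} m.
Arguments fc2 {R d} m.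
Arguments fverts {R d} m.
Arguments fdir {R d} m.
Arguments gp_face {R d} m.
Arguments gp_vert {R d} m.
Arguments gp_pt {R d} m.
Arguments gp_w {R d} m.
Arguments xK {R d} m.
Arguments mK {R d} m.
Arguments mS {R d} m.
Arguments mSs {R d} m.
Arguments mKs {R d} m.
Arguments dKS {R d} m.
Arguments nKS {R d} m.
Arguments mom1 {R d} m.
Arguments mom2 {R d} m.
Arguments gKS {R d} m.

Section Scheme.
Variables (R : realType) (d : nat) (M : mesh R d).

Local Notation cell := (cell M).
Local Notation face := (face M).
Local Notation vert := (vert M).
Local Notation gpt := (gpt M).
Local Notation vec := 'rV[R]_d.
Local Notation mat := 'M[R]_d.

Definition dotv (u v : vec) : R := \sum_(i < d) u 0 i * v 0 i.
Definition nrm2 (u : vec) : R := dotv u u.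
Definition tens (a b : vec) : mat := a^T *m b.
Definition ddot (A B : mat) : R := \sum_(i < d) \sum_(j < d) A i j * B i j.
Definition frob2 (A : mat) : R := ddot A A.
Definition symm (A : mat) : mat := 2^-1 *: (A + A^T).

Definition Tsig (s : face) : {set cell} := [set fc1 M s; fc2 M s].
Definition inc (K : cell) (s : face) : bool := K \in Tsig s.
Definition FK (K : cell) : {set face} := [set sg | inc K sg].
Definition VK (K : cell) : {set vert} := \bigcup_(sg in FK K) fverts M sg.
Definition Fs (s : vert) : {set face} := [set sg | s \in fverts M sg].
Definition Ts (s : vert) : {set cell} := [set K | s \in VK K].
Definition FKs (K : cell) (s : vert) : {set face} := FK K :&: Fs s.
Definition Gsub (s : vert) (sg : face) : {set gpt} :=
  [set b | (gp_face M b == sg) && (gp_vert M b == s)].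

Definition avgx (s : vert) (sg : face) : vec :=
  (mSs M sg s)^-1 *: \sum_(b in Gsub s sg) gp_w M b *: gp_pt M b.

Definition mesh_ok : Prop :=
  (forall sg, fdir M sg -> fc1 M sg = fc2 M sg) /\
  (forall sg, fc1 M sg != fc2 M sg -> nKS M (fc1 M sg) sg = - nKS M (fc2 M sg) sg) /\
  (forall K, 0 < mK M K) /\ (forall sg, 0 < mS M sg) /\
  (forall sg s, s \in fverts M sg -> 0 < mSs M sg s) /\
  (forall K s, s \in VK K -> 0 < mKs M K s) /\
  (forall K sg, inc K sg -> 0 < dKS M K sg /\ nrm2 (nKS M K sg) = 1) /\
  (forall b, 0 < gp_w M b /\ gp_vert M b \in fverts M (gp_face M b)) /\
  (forall sg s, s \in fverts M sg ->
      Gsub s sg != finset.set0 /\ \sum_(b in Gsub s sg) gp_w M b = mSs M sg s) /\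
  (forall sg, mS M sg = \sum_(s in fverts M sg) mSs M sg s) /\
  (forall K, mK M K = \sum_(s in VK K) mKs M K s) /\
  (* subcell (K,s) is the union of the cones of apex x_K over the
     subfaces (s,sigma), sigma in F_K cap F_s *)
  (forall K s, s \in VK K ->
     d%:R * mKs M K s = \sum_(sg in FKs K s) mSs M sg s * dKS M K sg) /\
  (forall K s, s \in VK K -> #|FKs K s| = d) /\
  (* definition of g_{K,sigma}^s *)
  (forall K s, s \in VK K ->
     \sum_(sg in FKs K s) tens (avgx s sg - xK M K) (gKS M K s sg) = 1%:M).

Definition HT := cell -> vec.
(* H_D : cell values u_K and face values u_{K,s}^{sigma,beta} (indexed by K
   and the Gauss point beta, which determines s and sigma) *)
Definition HD := ((cell -> vec) * (cell -> gpt -> vec))%type.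
Definition inHD (u : HD) : Prop :=
  (forall K b, ~~ inc K (gp_face M b) -> u.2 K b = 0) /\
  (forall K b, fdir M (gp_face M b) -> u.2 K b = 0).
(* H_C : cell values and one value per subface (s,sigma) *)
Definition HC := ((cell -> vec) * (vert -> face -> vec))%type.
Definition inHC (v : HC) : Prop :=
  (forall s sg, s \notin fverts M sg -> v.2 s sg = 0) /\
  (forall s sg, fdir M sg -> v.2 s sg = 0).

Definition jump (u : HD) (b : gpt) : vec :=
  u.2 (fc1 M (gp_face M b)) b - u.2 (fc2 M (gp_face M b)) b.
Definition avgS (u : HD) (s : vert) (sg : face) : vec :=
  (mSs M sg s)^-1 *: \sum_(b in Gsub s sg)
      gp_w M b *: (2^-1 *: (u.2 (fc1 M sg) b + u.2 (fc2 M sg) b)).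
Definition avgKS (u : HD) (K : cell) (s : vert) (sg : face) : vec :=
  (mSs M sg s)^-1 *: \sum_(b in Gsub s sg) gp_w M b *: u.2 K b.
Definition PiC (u : HD) : HC := (u.1, fun s sg => avgS u s sg).

Definition gradT (v : HC) (K : cell) (s : vert) : mat :=
  (mKs M K s)^-1 *: \sum_(sg in FKs K s)
     mSs M sg s *: tens (v.2 s sg - v.1 K) (nKS M K sg).
Definition gradB (u : HD) (K : cell) (s : vert) : mat :=
  \sum_(sg in FKs K s) tens (avgKS u K s sg - u.1 K) (gKS M K s sg).

Definition gammaS (u : HT) (sg : face) : vec :=
  if fdir M sg then 0 else
  (\sum_(K in Tsig sg) (dKS M K sg)^-1)^-1 *:
     \sum_(K in Tsig sg) (dKS M K sg)^-1 *: u K.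
Definition normT2 (u : HT) : R :=
  \sum_K \sum_(sg in FK K) mS M sg / dKS M K sg * nrm2 (gammaS u sg - u K).
Definition jterm (u : HD) (s : vert) (sg : face) : R :=
  (mSs M sg s)^-1 * \sum_(b in Gsub s sg) gp_w M b * nrm2 (jump u b).
Definition normD2 (u : HD) : R :=
  \sum_K \sum_(s in VK K) \sum_(sg in FKs K s)
     mKs M K s / dKS M K sg ^+ 2 * (nrm2 (u.1 K - avgS u s sg) + jterm u s sg).
Definition Jfun (u : HD) : R :=
  \sum_K \sum_(s in VK K) \sum_(sg in FKs K s)
     mKs M K s / dKS M K sg ^+ 2 * jterm u s sg.
Definition Jloc (u : HD) (s : vert) : R :=
  \sum_(K in Ts s) \sum_(sg in FKs K s) mKs M K s / dKS M K sg ^+ 2 * jterm u s sg.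
Definition sumGrad2 (u : HD) : R :=
  \sum_K \sum_(s in VK K) mKs M K s * frob2 (gradB u K s).
Definition sumEps2 (u : HD) : R :=
  \sum_K \sum_(s in VK K) mKs M K s * frob2 (symm (gradB u K s)).

(* bilinear forms; muK, lamK are the cell averages mu_K, lambda_K *)
Variables (muK lamK : cell -> R) (alpha : vert -> face -> R).

Definition bDs (s : vert) (u : HD) (v : HC) : R :=
  \sum_(K in Ts s) mKs M K s *
    (2 * muK K * ddot (symm (gradB u K s)) (symm (gradT v K s))
     + lamK K * \tr (gradB u K s) * \tr (gradT v K s)).
Definition bD (u : HD) (v : HC) : R := \sum_s bDs s u v.
Definition aDs (s : vert) (u w : HD) : R :=
  \sum_(sg in Fs s) alpha s sg / mSs M sg s *
     \sum_(b in Gsub s sg) gp_w M b * dotv (jump u b) (jump w b).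
Definition energy_s (u : HD) (s : vert) : R :=
  \sum_(K in Ts s) mKs M K s *
    (2 * muK K * frob2 (symm (gradB u K s)) + lamK K * (\tr (gradB u K s)) ^+ 2).

(* the local extension Pi_{FV,s}: admissible set and minimizer property *)
Definition admissible (s : vert) (uT : HT) (w : HD) : Prop :=
  [/\ inHD w,
      (forall K, w.1 K = if K \in Ts s then uT K else 0),
      (forall K b, gp_vert M b != s -> w.2 K b = 0),
      (forall v : HC, inHC v -> (forall K, v.1 K = 0) ->
          (forall s' sg, s' != s -> v.2 s' sg = 0) -> bDs s w v = 0) &
      (forall K b, K \in Ts s -> inc K (gp_face M b) -> gp_vert M b = s ->
          w.2 K b = w.1 K + (gp_pt M b - xK M K) *m (gradB w K s)^T)].
Definition isPiFVs (s : vert) (uT : HT) (w : HD) : Prop :=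
  admissible s uT w /\
  forall w', admissible s uT w' -> aDs s w w <= aDs s w' w'.

Definition PiFV (PiFVs : vert -> HT -> HD) (uT : HT) : HD :=
  (uT, fun K b => (PiFVs (gp_vert M b) uT).2 K b).

(* int_{(K,s)} |c + (x - x_K) A|^2 dx                                         *)
Definition sub_l2 (K : cell) (s : vert) (c : vec) (A : mat) : R :=
  mKs M K s * nrm2 c + 2 * dotv c (mom1 M K s *m A)
  + \tr (A *m A^T *m mom2 M K s).
(* || Pi_{L2} u ||_{L2}^2 ;  Pi_{L2} u (x) = u_K + (x - x_K) (grad u)^T *)
Definition l2sq (u : HD) : R :=
  \sum_K \sum_(s in VK K) sub_l2 K s (u.1 K) (gradB u K s)^T.
(* || Pi_{L2} u - r ||^2 for the rigid motion r(x) = a + x W, W skew *)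
Definition l2rig (u : HD) (a : vec) (W : mat) : R :=
  \sum_K \sum_(s in VK K)
     sub_l2 K s (u.1 K - (a + xK M K *m W)) ((gradB u K s)^T - W).
Definition l2quot (u : HD) : R :=
  inf [set x | exists (a : vec) (W : mat), W^T = - W /\ x = l2rig u a W].
Definition normT2quot (u : HT) : R :=
  inf [set x | exists (a : vec) (W : mat), W^T = - W /\
                 x = normT2 (fun K => u K - (a + xK M K *m W))].

End Scheme.

(* Main.v *)
Require Import Defs.
From HB Require Import structures.
From mathcomp Require Import all_boot all_order all_algebra.
From mathcomp Require Import all_classical all_reals.
Import Order.TTheory GRing.Theory Num.Theory.
Local Open Scope ring_scope.
From mathcomp Require Import ring lra.
Section Aux.
Variables (R : realType) (d : nat) (M : mesh R d).
Local Notation vec := 'rV[R]_d.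
Local Notation cell := (cell M).
Local Notation face := (face M).
Local Notation vert := (vert M).
Local Notation gpt := (gpt M).

Lemma sq_ge0 (x : R) : 0 <= x * x.
Proof. by rewrite -expr2 sqr_ge0. Qed.

Lemma nrm2_ge0 (u : vec) : 0 <= nrm2 u.
Proof. by rewrite /nrm2 /dotv; apply: sumr_ge0 => i _; exact: sq_ge0. Qed.

Lemma frob2_ge0 (A : 'M[R]_d) : 0 <= frob2 A.
Proof.
by rewrite /frob2 /ddot; apply: sumr_ge0 => i _; apply: sumr_ge0 => j _; exact: sq_ge0.
Qed.

Lemma inVK (K : cell) (s : vert) : (s \in VK K) = [exists sg, (sg \in FK K) && (s \in fverts M sg)].
Proof.
apply/bigcupP/existsP => [[sg H1 H2]|[sg /andP[H1 H2]]]; by exists sg => //; rewrite H1.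
Qed.

Lemma inFKs (K : cell) (s : vert) sg : (sg \in FKs K s) = (inc K sg) && (s \in fverts M sg).
Proof. by rewrite /FKs inE /FK /Fs !inE. Qed.

Lemma inTs (s : vert) K : (K \in Ts s) = (s \in VK K).
Proof. by rewrite /Ts inE. Qed.

Lemma FKs_VK (K : cell) s sg : sg \in FKs K s -> s \in VK K.
Proof.
rewrite inFKs => /andP[H1 H2]; rewrite inVK; apply/existsP; exists sg.
by rewrite /FK inE H1.
Qed.

End Aux.
Section F1.
Variables (R : realType) (d : nat) (M : mesh R d).
Local Notation vec := 'rV[R]_d.
Local Notation cell := (cell M).
Local Notation face := (face M).
Local Notation vert := (vert M).
Local Notation gpt := (gpt M).
Hypothesis Hm : mesh_ok M.

Ltac unpack := case: Hm => Hdir [Hn [HmK [HmS [HmSs [HmKs [HdKS [Hgp [HGsub [HmS_sum [HmK_sum [Hcone [Hcard Hg]]]]]]]]]]]].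

Lemma sum2_cond (A : {set vert}) (B : vert -> {set face}) (F : vert -> face -> R) :
  \sum_(s in A) \sum_(sg in B s) F s sg =
  \sum_s \sum_sg (if (s \in A) && (sg \in B s) then F s sg else 0).
Proof.
rewrite big_mkcond; apply: eq_bigr => s _; case: (s \in A) => /=.
  by rewrite big_mkcond.
by rewrite big1.
Qed.

Lemma sum2_condT {I J : finType} (A : {set I}) (B : I -> {set J}) (F : I -> J -> R) :
  \sum_(s in A) \sum_(sg in B s) F s sg =
  \sum_s \sum_sg (if (s \in A) && (sg \in B s) then F s sg else 0).
Proof.
rewrite big_mkcond; apply: eq_bigr => s _; case: (s \in A) => /=.
  by rewrite big_mkcond.
by rewrite big1.
Qed.

Lemma wmin_sc (A : {set cell}) (c : cell -> R) (x : cell -> R) (w : R) :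
  0 < \sum_(K in A) c K ->
  \sum_(K in A) c K * ((\sum_(K in A) c K)^-1 * \sum_(K in A) c K * x K - x K) ^+ 2
  <= \sum_(K in A) c K * (w - x K) ^+ 2.
Proof.
set S := \sum_(K in A) c K; set g := S^-1 * _ => HS.
have e : forall K, c K * (w - x K) ^+ 2 =
   c K * (w - g) ^+ 2 + 2 * (w - g) * (c K * g - c K * x K) + c K * (g - x K) ^+ 2.
  by move=> K; ring.
rewrite (eq_bigr _ (fun K _ => e K)) !big_split /= -mulr_sumr -mulr_suml sumrB -mulr_suml.
have -> : S * g - \sum_(i in A) c i * x i = 0.
  by rewrite /g mulrA mulfV ?mul1r ?subrr // gt_eqF.
rewrite mulr0 addr0 lerDr; apply: mulr_ge0; [exact: ltW | exact: sqr_ge0].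
Qed.

Lemma wmin (A : {set cell}) (c : cell -> R) (x : cell -> vec) (w : vec) :
  0 < \sum_(K in A) c K ->
  \sum_(K in A) c K * nrm2 ((\sum_(K in A) c K)^-1 *: \sum_(K in A) c K *: x K - x K)
  <= \sum_(K in A) c K * nrm2 (w - x K).
Proof.
move=> HS; rewrite /nrm2 /dotv.
under eq_bigr => K _ do rewrite mulr_sumr.
under [X in _ <= X]eq_bigr => K _ do rewrite mulr_sumr.
rewrite exchange_big [X in _ <= X]exchange_big /=; apply: ler_sum => i _.
have := wmin_sc A c (fun K => x K 0 i) (w 0 i) HS.
set L := \sum_(K in A) _; set L' := \sum_(K in A) _ => H.
have ex : \sum_(k in A) (c k *: x k) 0 i = \sum_(k in A) c k * x k 0 i.
  by apply: eq_bigr => k _; rewrite mxE.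
apply: le_trans (le_trans H _).
  rewrite le_eqVlt; apply/orP; left; apply/eqP.
  apply: eq_bigr => K _; rewrite !mxE summxE ex expr2 //.
rewrite le_eqVlt; apply/orP; left; apply/eqP.
apply: eq_bigr => K _; rewrite !mxE expr2 //.
Qed.

End F1.
Section F1b.
Variables (R : realType) (d : nat) (M : mesh R d).
Local Notation vec := 'rV[R]_d.
Local Notation cell := (cell M).
Local Notation face := (face M).
Local Notation vert := (vert M).
Local Notation gpt := (gpt M).
Hypothesis Hm : mesh_ok M.

Ltac unpack := case: Hm => Hdir [Hn [HmK [HmS [HmSs [HmKs [HdKS [Hgp [HGsub [HmS_sum [HmK_sum [Hcone [Hcard Hg]]]]]]]]]]]].

Lemma swapKF (F : cell -> face -> R) :
  \sum_K \sum_(sg in FK K) F K sg = \sum_sg \sum_(K in Tsig sg) F K sg.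
Proof.
under eq_bigr => K _ do rewrite big_mkcond.
rewrite exchange_big /=; apply: eq_bigr => sg _; rewrite [RHS]big_mkcond.
by apply: eq_bigr => K _; rewrite /FK inE.
Qed.

Lemma swapSF (K : cell) (F : vert -> face -> R) :
  \sum_(s in VK K) \sum_(sg in FKs K s) F s sg =
  \sum_(sg in FK K) \sum_(s in fverts M sg) F s sg.
Proof.
rewrite sum2_condT sum2_condT exchange_big /=; apply: eq_bigr => sg _.
apply: eq_bigr => s _; congr (if _ then _ else _).
rewrite inFKs /FK inE.
case Hi: (inc K sg); case Hf: (s \in fverts M sg); rewrite ?andbF ?andbT //=.
by apply: (@FKs_VK _ _ M K s sg); rewrite inFKs Hi Hf.
Qed.

Lemma normT2_faces (u : HT M) : normT2 u =
  \sum_sg \sum_(K in Tsig sg) mS M sg / dKS M K sg * nrm2 (gammaS u sg - u K).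
Proof. by rewrite /normT2 swapKF. Qed.

Lemma normD_lower (u : HD M) :
  \sum_sg \sum_(K in Tsig sg) \sum_(s in fverts M sg)
     mSs M sg s / dKS M K sg * nrm2 (u.1 K - avgS u s sg) <= d%:R * normD2 u.
Proof.
unpack.
rewrite /normD2 mulr_sumr -swapKF; apply: ler_sum => K _.
rewrite -swapSF mulr_sumr; apply: ler_sum => s _.
rewrite mulr_sumr; apply: ler_sum => sg Hsg.
have := Hsg; rewrite inFKs => /andP[Hi Hf].
have [Hd _] := HdKS K sg Hi.
have HsV := @FKs_VK _ _ M K s sg Hsg.
have Hj : 0 <= jterm u s sg.
  rewrite /jterm; apply: mulr_ge0; first by rewrite invr_ge0 ltW // HmSs.
  apply: sumr_ge0 => b _; apply: mulr_ge0; [exact: ltW (Hgp b).1 | exact: nrm2_ge0].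
have Hc : mSs M sg s * dKS M K sg <= d%:R * mKs M K s.
  rewrite (Hcone K s HsV) (bigD1 sg) //= lerDl; apply: sumr_ge0 => sg' /andP[H' _].
  move: H'; rewrite inFKs => /andP[Hi' Hf']; apply: mulr_ge0; apply: ltW.
    exact: HmSs. exact: (HdKS K sg' Hi').1.
have Hn0 := @nrm2_ge0 R d (u.1 K - avgS u s sg).
rewrite mulrA; apply: (le_trans (y := d%:R * (mKs M K s / dKS M K sg ^+ 2) * nrm2 (u.1 K - avgS u s sg))); last first.
  apply: ler_wpM2l; last by rewrite lerDl.
  apply: mulr_ge0; first by rewrite ler0n.
  apply: mulr_ge0; [exact: ltW (HmKs K s HsV) | by rewrite invr_ge0 exprn_ge0 // ltW].
apply: ler_wpM2r => //.
have -> : mSs M sg s / dKS M K sg = (mSs M sg s * dKS M K sg) / dKS M K sg ^+ 2.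
  by field; rewrite gt_eqF.
rewrite mulrA; apply: ler_wpM2r => //; by rewrite invr_ge0 exprn_ge0 // ltW.
Qed.

End F1b.
Section F1c.
Variables (R : realType) (d : nat) (M : mesh R d).
Local Notation vec := 'rV[R]_d.
Local Notation cell := (cell M).
Local Notation face := (face M).
Local Notation vert := (vert M).
Local Notation gpt := (gpt M).
Hypothesis Hm : mesh_ok M.

Ltac unpack := case: Hm => Hdir [Hn [HmK [HmS [HmSs [HmKs [HdKS [Hgp [HGsub [HmS_sum [HmK_sum [Hcone [Hcard Hg]]]]]]]]]]]].

Lemma nrm2B (a b : vec) : nrm2 (a - b) = nrm2 (b - a).
Proof. by rewrite /nrm2 /dotv; apply: eq_bigr => i _; rewrite !mxE; ring. Qed.

Lemma normT_le_normD (u : HD M) : inHD u -> normT2 u.1 <= d%:R * normD2 u.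
Proof.
move=> [Hu1 Hu2].
have Hmo := Hm; unpack.
rewrite normT2_faces; apply: le_trans (@normD_lower R d M Hmo u); apply: ler_sum => sg _.
rewrite HmS_sum.
under eq_bigr => K _ do rewrite mulr_suml mulr_suml.
rewrite exchange_big [X in _ <= X]exchange_big /=; apply: ler_sum => s Hf.
have HS := HmSs sg s Hf.
under eq_bigr => K _ do rewrite -mulrA.
under [X in _ <= X]eq_bigr => K _ do rewrite -mulrA.
rewrite -!mulr_sumr; apply: ler_wpM2l; first exact: ltW.
under [X in _ <= X]eq_bigr => K _ do rewrite nrm2B.
rewrite /gammaS; case Hd: (fdir M sg).
  have -> : avgS u s sg = 0.
    rewrite /avgS big1 ?scaler0 // => b; rewrite inE => /andP[/eqP Hb _].
    by rewrite !Hu2 ?Hb // addr0 !scaler0.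
  by [].
apply: wmin.
rewrite (bigD1 (fc1 M sg)) /=; last by rewrite /Tsig !inE eqxx.
apply: ltr_pwDl.
  rewrite invr_gt0; apply: (HdKS _ _ _).1; by rewrite /inc /Tsig !inE eqxx.
apply: sumr_ge0 => K /andP[HK _]; rewrite invr_ge0; apply: ltW; exact: (HdKS _ _ HK).1.
Qed.

End F1c.
Section Local.
Variables (R : realType) (d : nat) (M : mesh R d).
Local Notation vec := 'rV[R]_d.
Local Notation cell := (cell M).
Local Notation face := (face M).
Local Notation vert := (vert M).
Local Notation gpt := (gpt M).
Variables (muK lamK : cell -> R).

Lemma Gsub_vert s sg b : b \in Gsub (M:=M) s sg -> gp_vert M b = s.
Proof. by rewrite inE => /andP[_ /eqP]. Qed.

Lemma Gsub_face s sg b : b \in Gsub (M:=M) s sg -> gp_face M b = sg.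
Proof. by rewrite inE => /andP[/eqP]. Qed.

Arguments Gsub_vert {s sg b}.
Arguments Gsub_face {s sg b}.

Section LE.
Variables (s : vert) (w ws : HD M).
Hypothesis H2 : forall K b, gp_vert M b = s -> w.2 K b = ws.2 K b.
Hypothesis H1 : forall K, K \in Ts s -> w.1 K = ws.1 K.

Lemma loc_avgKS K sg : avgKS w K s sg = avgKS ws K s sg.
Proof. by rewrite /avgKS; congr (_ *: _); apply: eq_bigr => b Hb; rewrite H2 // (Gsub_vert Hb). Qed.

Lemma loc_avgS sg : avgS w s sg = avgS ws s sg.
Proof. by rewrite /avgS; congr (_ *: _); apply: eq_bigr => b Hb; rewrite !H2 // (Gsub_vert Hb). Qed.

Lemma loc_jterm sg : jterm w s sg = jterm ws s sg.
Proof.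
by rewrite /jterm /jump; congr (_ * _); apply: eq_bigr => b Hb; rewrite !H2 // (Gsub_vert Hb).
Qed.

Lemma loc_gradB K : K \in Ts s -> gradB w K s = gradB ws K s.
Proof. by move=> HK; rewrite /gradB; apply: eq_bigr => sg _; rewrite loc_avgKS H1. Qed.

Lemma loc_gradT K : K \in Ts s -> gradT (PiC w) K s = gradT (PiC ws) K s.
Proof. by move=> HK; rewrite /gradT /PiC /=; congr (_ *: _); apply: eq_bigr => sg _; rewrite loc_avgS H1. Qed.

Lemma loc_bDs : bDs muK lamK s w (PiC w) = bDs muK lamK s ws (PiC ws).
Proof. by rewrite /bDs; apply: eq_bigr => K HK; rewrite loc_gradB // loc_gradT. Qed.

Lemma loc_energy : energy_s muK lamK w s = energy_s muK lamK ws s.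
Proof. by rewrite /energy_s; apply: eq_bigr => K HK; rewrite loc_gradB. Qed.

Lemma loc_Jloc : Jloc w s = Jloc ws s.
Proof. by rewrite /Jloc; apply: eq_bigr => K HK; apply: eq_bigr => sg _; rewrite loc_jterm. Qed.
End LE.

Lemma swapSK (F : vert -> cell -> R) :
  \sum_s \sum_(K in Ts s) F s K = \sum_K \sum_(s in VK K) F s K.
Proof.
under eq_bigr => s _ do rewrite big_mkcond.
rewrite exchange_big /=; apply: eq_bigr => K _; rewrite [RHS]big_mkcond.
by apply: eq_bigr => s _; rewrite inTs.
Qed.

End Local.
Section Coer.
Variables (R : realType) (d : nat) (M : mesh R d).
Local Notation vec := 'rV[R]_d.
Local Notation cell := (cell M).
Local Notation face := (face M).
Local Notation vert := (vert M).
Local Notation gpt := (gpt M).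
Hypothesis Hm : mesh_ok M.
Variables (mu_lo : R) (muK lamK : cell -> R) (alpha : vert -> face -> R)
  (PiFVs : vert -> HT M -> HD M) (theta2 : R) (theta2s : vert -> R).
Hypothesis Hmu0 : 0 < mu_lo.
Hypothesis Hmu : forall K, mu_lo <= muK K.
Hypothesis Hlam : forall K, 0 < lamK K.
Hypothesis Hiff : forall s uT w, isPiFVs muK lamK alpha s uT w <-> w = PiFVs s uT.
Hypothesis Hth : forall s, theta2 <= theta2s s.
Hypothesis Hloc : forall s (uT : HT M),
     theta2s s * (energy_s muK lamK (PiFVs s uT) s + Jloc (PiFVs s uT) s)
       <= bDs muK lamK s (PiFVs s uT) (PiC (PiFVs s uT)).

Ltac unpack := case: Hm => Hdir [Hn [HmK [HmS [HmSs [HmKs [HdKS [Hgp [HGsub [HmS_sum [HmK_sum [Hcone [Hcard Hg]]]]]]]]]]]].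

Lemma admPi s uT : admissible muK lamK s uT (PiFVs s uT).
Proof. by have [H _] := (Hiff s uT (PiFVs s uT)).2 erefl. Qed.

Lemma inHD_PiFV uT : inHD (PiFV PiFVs uT).
Proof.
split => K b /=.
  by case: (admPi (gp_vert M b) uT) => [[H1 _] _ _ _ _]; apply: H1.
by case: (admPi (gp_vert M b) uT) => [[_ H1] _ _ _ _]; apply: H1.
Qed.

Lemma PiFV_loc s uT :
  (forall K b, gp_vert M b = s -> (PiFV PiFVs uT).2 K b = (PiFVs s uT).2 K b) /\
  (forall K, K \in Ts s -> (PiFV PiFVs uT).1 K = (PiFVs s uT).1 K).
Proof.
split; first by move=> K b /= ->.
move=> K HK /=; case: (admPi s uT) => _ H _ _ _; by rewrite H HK.
Qed.

Lemma energy_ge0 (w : HD M) s : 0 <= energy_s muK lamK w s.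
Proof.
unpack; apply: sumr_ge0 => K HK; apply: mulr_ge0.
  by apply: ltW; apply: HmKs; rewrite -inTs.
apply: addr_ge0; last by apply: mulr_ge0; [exact: ltW | exact: sqr_ge0].
apply: mulr_ge0; last exact: frob2_ge0.
by apply: mulr_ge0 => //; apply: le_trans (Hmu K); exact: ltW.
Qed.

Lemma Jloc_ge0 (w : HD M) s : 0 <= Jloc w s.
Proof.
unpack; apply: sumr_ge0 => K HK; apply: sumr_ge0 => sg Hsg.
have := Hsg; rewrite inFKs => /andP[Hi Hf].
apply: mulr_ge0.
  apply: mulr_ge0; first by apply: ltW; apply: HmKs; rewrite -inTs.
  by rewrite invr_ge0 exprn_ge0 // ltW // (HdKS K sg Hi).1.
rewrite /jterm; apply: mulr_ge0; first by rewrite invr_ge0 ltW // HmSs.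
apply: sumr_ge0 => b _; apply: mulr_ge0; [exact: ltW (Hgp b).1 | exact: nrm2_ge0].
Qed.

Lemma Jfun_ge0 (w : HD M) : 0 <= Jfun w.
Proof.
have -> : Jfun w = \sum_s Jloc w s by rewrite /Jloc swapSK.
by apply: sumr_ge0 => s _; exact: Jloc_ge0.
Qed.

Lemma sumEps2_ge0 (w : HD M) : 0 <= sumEps2 w.
Proof.
unpack; apply: sumr_ge0 => K _; apply: sumr_ge0 => s Hs; apply: mulr_ge0.
  exact: ltW (HmKs K s Hs).
exact: frob2_ge0.
Qed.

Hypothesis Hth0 : 0 <= theta2.

Lemma coer uT : theta2 * (2 * mu_lo * sumEps2 (PiFV PiFVs uT) + Jfun (PiFV PiFVs uT))
   <= bD muK lamK (PiFV PiFVs uT) (PiC (PiFV PiFVs uT)).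
Proof.
have Hmo := Hm; unpack.
set w := PiFV PiFVs uT.
have E1 : 2 * mu_lo * sumEps2 w + Jfun w <= \sum_s (energy_s muK lamK w s + Jloc w s).
  rewrite big_split /=; apply: lerD; last by rewrite /Jloc swapSK.
  rewrite /energy_s swapSK /sumEps2 mulr_sumr; apply: ler_sum => K _.
  rewrite mulr_sumr; apply: ler_sum => s Hs.
  have HmKs0 := ltW (HmKs K s Hs).
  rewrite mulrCA; apply: ler_wpM2l => //.
  apply: le_trans (_ : _ <= 2 * muK K * frob2 (symm (gradB w K s))) _; last first.
    by rewrite lerDl; apply: mulr_ge0; [exact: ltW | exact: sqr_ge0].
  by apply: ler_wpM2r; [exact: frob2_ge0 | apply: ler_wpM2l].
apply: le_trans (ler_wpM2l Hth0 E1) _.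
rewrite mulr_sumr /bD; apply: ler_sum => s _.
have [L2 L1] := PiFV_loc s uT.
rewrite (@loc_bDs R d M muK lamK _ _ _ L2 L1) (@loc_energy R d M muK lamK _ _ _ L2 L1) (@loc_Jloc R d M _ _ _ L2).
apply: le_trans (Hloc s uT); apply: ler_wpM2r; last exact: Hth.
by apply: addr_ge0; [exact: energy_ge0 | exact: Jloc_ge0].
Qed.
End Coer.
Section Alg.
Variable R : realType.

Lemma alg (dd cD cK cL2 th mu T D G J E L B e : R) :
  0 < dd -> 0 < cD -> 0 < cK -> 0 <= cL2 -> 0 <= th -> 0 < mu ->
  0 <= E -> 0 <= J -> 0 <= e ->
  T <= dd * D -> D <= cD * (G + J) -> G <= cK * (L + E + J) ->
  L <= cL2 * (E + J) + e -> th * (2 * mu * E + J) <= B ->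
  th / (dd * cD * cK * (1 + cL2)) *
     Num.min (2 * mu) (1 / (1 + (cK * (1 + cL2))^-1)) * T
  <= B + th / (dd * cD * cK * (1 + cL2)) *
     Num.min (2 * mu) (1 / (1 + (cK * (1 + cL2))^-1)) * (dd * cD * cK * e).
Proof.
move=> Hd HcD HcK HcL Hth Hmu HE HJ He HT HD HG HL HB.
set C := cK * (1 + cL2).
have HC : 0 < C by rewrite /C mulr_gt0 //; lra.
have -> : dd * cD * cK * (1 + cL2) = dd * cD * C by rewrite /C !mulrA.
set m := Num.min _ _.
have Hm1 : m <= 2 * mu by rewrite /m ge_min lexx.
have HCi : 0 < 1 + C^-1.
  have : 0 < C^-1 by rewrite invr_gt0.
  lra.
have Hm2 : m * (1 + C^-1) <= 1.
  rewrite -ler_pdivlMr // /m ge_min; apply/orP; right; by rewrite mul1r.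
have Hm0 : 0 <= m.
  rewrite /m le_min; apply/andP; split; first by rewrite mulr_ge0 // ltW.
  by rewrite mul1r invr_ge0 ltW.
have HT2 : T <= dd * cD * (C * (E + J) + J) + dd * cD * cK * e.
  apply: (le_trans HT); rewrite -!mulrA -mulrDr ler_pM2l //.
  rewrite -mulrDr; apply: (le_trans HD); rewrite ler_pM2l //.
  have HL' := ler_wpM2l (ltW HcK) HL.
  rewrite /C; nra.
have Hth0 : 0 <= th / (dd * cD * C) * m.
  apply: mulr_ge0 => //; apply: divr_ge0 => //; apply: ltW; rewrite !mulr_gt0 //; lra.
apply: le_trans (ler_wpM2l Hth0 HT2) _.
rewrite mulrDr lerD2r; apply: le_trans HB.
have -> : th / (dd * cD * C) * m * (dd * cD * (C * (E + J) + J)) =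
   th * (m * E + m * (1 + C^-1) * J).
  by field; rewrite !gt_eqF.
apply: ler_wpM2l => //; apply: lerD.
  by apply: ler_wpM2r.
by rewrite -[X in _ <= X]mul1r; apply: ler_wpM2r.
Qed.
End Alg.
Section Rigid.
Variables (R : realType) (d : nat) (M : mesh R d).
Local Notation vec := 'rV[R]_d.
Local Notation mat := 'M[R]_d.
Local Notation cell := (cell M).
Local Notation face := (face M).
Local Notation vert := (vert M).
Local Notation gpt := (gpt M).
Hypothesis Hm : mesh_ok M.

Ltac unpack := case: Hm => Hdir [Hn [HmK [HmS [HmSs [HmKs [HdKS [Hgp [HGsub [HmS_sum [HmK_sum [Hcone [Hcard Hg]]]]]]]]]]]].

Definition subHD (u v : HD M) : HD M :=
  (fun K => u.1 K - v.1 K, fun K b => u.2 K b - v.2 K b).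

Lemma avgKS_sub u v K s sg : avgKS (subHD u v) K s sg = avgKS u K s sg - avgKS v K s sg.
Proof.
rewrite /avgKS -scalerBr; congr (_ *: _); rewrite -sumrB; apply: eq_bigr => b _.
by rewrite scalerBr.
Qed.

Lemma tensBl (x y g : vec) : tens (x - y) g = tens x g - tens y g.
Proof. by rewrite /tens linearB /= mulmxBl. Qed.

Lemma gradB_sub u v K s : gradB (subHD u v) K s = gradB u K s - gradB v K s.
Proof.
rewrite /gradB -sumrB; apply: eq_bigr => sg _; rewrite avgKS_sub -tensBl; congr tens.
by apply/matrixP => i j; rewrite !mxE /=; ring.
Qed.

Lemma jump_sub u v b : jump (subHD u v) b = jump u b - jump v b.
Proof. by rewrite /jump; apply/matrixP => i j; rewrite !mxE /=; ring. Qed.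

Variables (a : vec) (W : mat).
Hypothesis HW : W^T = - W.
Definition rig (x : vec) : vec := a + x *m W.

Lemma symmWT : symm W^T = 0.
Proof. by rewrite /symm trmxK HW addNr scaler0. Qed.

Lemma trWT : \tr W^T = 0.
Proof.
have h : \tr W = - \tr W by rewrite -{1}mxtrace_tr HW linearN.
rewrite mxtrace_tr; lra.
Qed.

Lemma gradB_rig (u : HD M) K s : s \in VK K -> u.1 K = rig (xK M K) ->
  (forall sg b, sg \in FKs K s -> b \in Gsub s sg -> u.2 K b = rig (gp_pt M b)) ->
  gradB u K s = W^T.
Proof.
have Hmo := Hm; unpack.
move=> Hs H1 H2.
have e : forall sg, sg \in FKs K s ->
    tens (avgKS u K s sg - u.1 K) (gKS M K s sg) =
    W^T *m tens (avgx s sg - xK M K) (gKS M K s sg).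
  move=> sg Hsg; have := Hsg; rewrite inFKs => /andP[Hi Hf].
  have [_ Hw] := HGsub sg s Hf.
  have HmS0 : mSs M sg s != 0 by rewrite gt_eqF // HmSs.
  have -> : avgKS u K s sg = a + avgx s sg *m W.
    rewrite /avgKS /avgx.
    under eq_bigr => b Hb do rewrite (H2 sg b Hsg Hb) /rig scalerDr.
    rewrite big_split /= -scaler_suml Hw scalerDr scalerA mulVf // scale1r.
    congr (_ + _); rewrite -scalemxAl mulmx_suml; congr (_ *: _).
    by apply: eq_bigr => b _; rewrite scalemxAl.
  rewrite H1 /rig /tens mulmxA; congr (_ *m _).
  have -> : a + avgx s sg *m W - (a + xK M K *m W) = (avgx s sg - xK M K) *m W.
    by rewrite mulmxBl; apply/matrixP => i j; rewrite !mxE; ring.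
  by rewrite trmx_mul.
by rewrite /gradB (eq_bigr _ e) -mulmx_sumr Hg // mulmx1.
Qed.

End Rigid.
Arguments rig {R d} a W x.
Arguments gradB_rig {R d M} Hm a W.
Arguments symmWT {R d W}.
Arguments trWT {R d W}.
Arguments subHD {R d M}.
Arguments gradB_sub {R d M}.
Arguments jump_sub {R d M}.
Arguments Gsub_face {R d M s sg b}.
Arguments Gsub_vert {R d M s sg b}.
Section RigidPi.
Variables (R : realType) (d : nat) (M : mesh R d).
Local Notation vec := 'rV[R]_d.
Local Notation mat := 'M[R]_d.
Local Notation cell := (cell M).
Local Notation face := (face M).
Local Notation vert := (vert M).
Local Notation gpt := (gpt M).
Hypothesis Hm : mesh_ok M.
Variables (muK lamK : cell -> R) (alpha : vert -> face -> R).
Hypothesis Hnd : forall sg, ~~ fdir M sg.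
Variables (a : vec) (W : mat).
Hypothesis HW : W^T = - W.

Definition Rs (s : vert) : HD M :=
  (fun K => if K \in Ts s then rig a W (xK M K) else 0,
   fun K b => if inc K (gp_face M b) && (gp_vert M b == s) then rig a W (gp_pt M b) else 0).
Definition urig (uT : HT M) : HT M := fun K => uT K - rig a W (xK M K).

Lemma gradB_Rs K s : K \in Ts s -> gradB (Rs s) K s = W^T.
Proof.
move=> HK; apply: (gradB_rig Hm a W).
- by rewrite -inTs.
- by rewrite /= HK.
move=> sg b Hsg Hb /=.
have := Hsg; rewrite inFKs => /andP[Hi _].
by rewrite (Gsub_face Hb) (Gsub_vert Hb) Hi eqxx.
Qed.

Lemma inc_fc1 sg : inc (fc1 M sg) sg.
Proof. by rewrite /inc /Tsig !inE eqxx. Qed.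
Lemma inc_fc2 sg : inc (fc2 M sg) sg.
Proof. by rewrite /inc /Tsig !inE eqxx orbT. Qed.

Lemma jump_Rs s b : gp_vert M b = s -> jump (Rs s) b = 0.
Proof. by move=> Hb; rewrite /jump /= inc_fc1 inc_fc2 Hb eqxx /= subrr. Qed.

Lemma symmB (A B : mat) : symm (A - B) = symm A - symm B.
Proof. by apply/matrixP => i j; rewrite !mxE; ring. Qed.

Lemma adm_rig s uT w : admissible muK lamK s uT w ->
  admissible muK lamK s (urig uT) (subHD w (Rs s)).
Proof.
case=> [[Hi1 Hi2] H2 H3 H4 H5]; split.
- split => K b /=.
    by move=> Hn; rewrite Hi1 // (negbTE Hn) /= subr0.
  by move=> Hf; move: (Hnd (gp_face M b)); rewrite Hf.
- by move=> K /=; rewrite H2 /urig; case: (K \in Ts s) => //; rewrite subr0.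
- move=> K b Hb /=; rewrite H3 //.
  have -> : (gp_vert M b == s) = false by apply/negbTE.
  by rewrite andbF subr0.
- move=> v Hv Hv1 Hv2; rewrite -(H4 v Hv Hv1 Hv2) /bDs; apply: eq_bigr => K HK.
  by rewrite gradB_sub gradB_Rs // symmB symmWT // subr0 linearB /= trWT // subr0.
move=> K b HK Hinc Hvb /=.
rewrite H5 // gradB_sub gradB_Rs // HK Hinc Hvb eqxx /= /rig.
rewrite linearB /= trmxK mulmxBr !mulmxBl.
by apply/matrixP => i j; rewrite !mxE; ring.
Qed.

Lemma aDs_rig s w : aDs alpha s (subHD w (Rs s)) (subHD w (Rs s)) = aDs alpha s w w.
Proof.
rewrite /aDs; apply: eq_bigr => sg _; congr (_ * _); apply: eq_bigr => b Hb.
by rewrite jump_sub jump_Rs ?(Gsub_vert Hb) // subr0.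
Qed.

End RigidPi.
Arguments Rs {R d M}.
Arguments urig {R d M}.
Arguments adm_rig {R d M}.
Arguments aDs_rig {R d M}.
Arguments gradB_Rs {R d M}.
Arguments jump_Rs {R d M}.
Section RigidPiFV.
Variables (R : realType) (d : nat) (M : mesh R d).
Local Notation vec := 'rV[R]_d.
Local Notation mat := 'M[R]_d.
Local Notation cell := (cell M).
Local Notation face := (face M).
Local Notation vert := (vert M).
Local Notation gpt := (gpt M).
Hypothesis Hm : mesh_ok M.
Variables (muK lamK : cell -> R) (alpha : vert -> face -> R) (PiFVs : vert -> HT M -> HD M).
Hypothesis Hnd : forall sg, ~~ fdir M sg.
Hypothesis Hiff : forall s uT w, isPiFVs muK lamK alpha s uT w <-> w = PiFVs s uT.

Lemma PiFVs_rig a W (HW : W^T = - W) s uT :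
  PiFVs s (urig a W uT) = subHD (PiFVs s uT) (Rs a W s).
Proof.
symmetry; apply/Hiff; split.
  apply: (adm_rig Hm muK lamK Hnd a W HW); exact: (@admPi R d M muK lamK alpha PiFVs Hiff s uT).
move=> w'' Hw''; rewrite aDs_rig.
have HW' : (- W)^T = - (- W) by rewrite linearN /= HW.
have H3 := adm_rig Hm muK lamK Hnd (- a) (- W) HW' _ _ _ Hw''.
have Eu : urig (- a) (- W) (urig a W uT) = uT.
  apply: boolp.funext => K; rewrite /urig /rig.
  rewrite mulmxN; by apply/matrixP => i j; rewrite !mxE; ring.
rewrite Eu in H3.
have [_ Hmin] := (Hiff s uT (PiFVs s uT)).2 erefl.
by apply: le_trans (Hmin _ H3) _; rewrite aDs_rig.
Qed.

Definition Rg a W : HD M :=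
  (fun K => rig a W (xK M K),
   fun K b => if inc K (gp_face M b) then rig a W (gp_pt M b) else 0).

Lemma PiFV_rig a W (HW : W^T = - W) uT :
  PiFV PiFVs (urig a W uT) = subHD (PiFV PiFVs uT) (Rg a W).
Proof.
rewrite /PiFV /subHD; congr pair.
apply: boolp.funext => K; apply: boolp.funext => b.
by rewrite PiFVs_rig //= eqxx andbT.
Qed.

Lemma gradB_Rg a W K s : s \in VK K -> gradB (Rg a W) K s = W^T.
Proof.
move=> Hs; apply: (gradB_rig Hm a W) => // sg b Hsg Hb /=.
have := Hsg; rewrite inFKs => /andP[Hi _].
by rewrite (Gsub_face Hb) Hi.
Qed.

Lemma jump_Rg a W b : jump (Rg a W) b = 0.
Proof. by rewrite /jump /= inc_fc1 inc_fc2 subrr. Qed.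

Lemma sumEps2_rig a W (HW : W^T = - W) w : sumEps2 (subHD w (Rg a W)) = sumEps2 w.
Proof.
apply: eq_bigr => K _; apply: eq_bigr => s Hs.
by rewrite gradB_sub gradB_Rg // symmB symmWT // subr0.
Qed.

Lemma Jfun_rig a W w : Jfun (subHD w (Rg a W)) = Jfun w.
Proof.
apply: eq_bigr => K _; apply: eq_bigr => s Hs; apply: eq_bigr => sg _.
congr (_ * _); rewrite /jterm; congr (_ * _); apply: eq_bigr => b _.
by rewrite jump_sub jump_Rg subr0.
Qed.

Lemma l2sq_rig a W w : l2sq (subHD w (Rg a W)) = l2rig w a W.
Proof.
apply: eq_bigr => K _; apply: eq_bigr => s Hs.
rewrite gradB_sub gradB_Rg //; congr sub_l2; by apply/matrixP => i j; rewrite !mxE.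
Qed.

End RigidPiFV.
Arguments PiFV_rig {R d M}.
Arguments sumEps2_rig {R d M}.
Arguments Jfun_rig {R d M}.
Arguments l2sq_rig {R d M}.
Arguments Rg {R d M}.
Section Pos.
Variables (R : realType) (d : nat) (M : mesh R d).
Hypothesis Hm : mesh_ok M.
Ltac unpack := case: Hm => Hdir [Hn [HmK [HmS [HmSs [HmKs [HdKS [Hgp [HGsub [HmS_sum [HmK_sum [Hcone [Hcard Hg]]]]]]]]]]]].

Lemma normT2_ge0 (u : HT M) : 0 <= normT2 u.
Proof.
unpack; apply: sumr_ge0 => K _; apply: sumr_ge0 => sg; rewrite inE => Hi.
apply: mulr_ge0; last exact: nrm2_ge0.
by apply: divr_ge0; apply: ltW; [exact: HmS | exact: (HdKS K sg Hi).1].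
Qed.

Lemma sumGrad2_ge0 (u : HD M) : 0 <= sumGrad2 u.
Proof.
unpack; apply: sumr_ge0 => K _; apply: sumr_ge0 => s Hs; apply: mulr_ge0.
  exact: ltW (HmKs K s Hs).
exact: frob2_ge0.
Qed.
End Pos.
Arguments normT2_ge0 {R d M}.
Arguments sumGrad2_ge0 {R d M}.
Theorem theorem4p7 (R : realType) (d : nat) (M : mesh R d)
  (mu_lo mu_hi : R) (muK lamK : cell M -> R)
  (alpha_lo alpha_hi : R) (alpha : vert M -> face M -> R)
  (PiFVs : vert M -> HT M -> HD M)
  (theta2 : R) (theta2s : vert M -> R) (cK cD cL2 : R) :
  (d = 2%N \/ d = 3%N) ->
  mesh_ok M ->
  (* Lame parameters (cell averages) *)
  0 < mu_lo -> (forall K, mu_lo <= muK K <= mu_hi) -> (forall K, 0 < lamK K) ->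
  (* stabilization weights *)
  0 < alpha_lo ->
  (forall s sg, sg \in Fs s -> alpha_lo <= alpha s sg <= alpha_hi) ->
  (* Pi_{FV,s} u is the (existing and unique) constrained minimizer *)
  (forall s uT w, isPiFVs muK lamK alpha s uT w <-> w = PiFVs s uT) ->
  (* local coercivity assumption *)
  0 < theta2 -> (forall s, theta2 <= theta2s s) ->
  (forall s (uT : HT M),
     theta2s s * (energy_s muK lamK (PiFVs s uT) s + Jloc (PiFVs s uT) s)
       <= bDs muK lamK s (PiFVs s uT) (PiC (PiFVs s uT))) ->
  (* constants c_K (discrete Korn) and c_D *)
  0 < cK -> 0 < cD -> 0 <= cL2 ->
  (forall uT : HT M,
     sumGrad2 (PiFV PiFVs uT)
       <= cK * (l2sq (PiFV PiFVs uT) + sumEps2 (PiFV PiFVs uT) + Jfun (PiFV PiFVs uT))) ->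
  (forall u : HD M, inHD u -> normD2 u <= cD * (sumGrad2 u + Jfun u)) ->
  let Theta0 := theta2 / (d%:R * cD * cK * (1 + cL2)) *
                Num.min (2 * mu_lo) (1 / (1 + (cK * (1 + cL2))^-1)) in
  (* (a) Gamma_D of positive measure *)
  ((exists sg, fdir M sg) ->
   (forall uT : HT M,
      l2sq (PiFV PiFVs uT) <= cL2 * (sumEps2 (PiFV PiFVs uT) + Jfun (PiFV PiFVs uT))) ->
   exists Theta, Theta0 <= Theta /\
     forall uT : HT M,
       Theta * normT2 uT <= bD muK lamK (PiFV PiFVs uT) (PiC (PiFV PiFVs uT)))
  /\
  (* (b) Gamma_N = boundary of Omega : statement on H_T / R(Omega) *)
  ((forall sg, ~~ fdir M sg) ->
   (forall uT : HT M,
      l2quot (PiFV PiFVs uT) <= cL2 * (sumEps2 (PiFV PiFVs uT) + Jfun (PiFV PiFVs uT))) ->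
   exists Theta, Theta0 <= Theta /\
     forall uT : HT M,
       Theta * normT2quot uT <= bD muK lamK (PiFV PiFVs uT) (PiC (PiFV PiFVs uT))).
Proof.
move=> Hdim Hm Hmu0 Hmu Hlam Hal0 Hal Hiff Hth0 Hth Hloc HcK HcD HcL2 HKorn HcDh Theta0.
have Hd : 0 < d%:R :> R by case: Hdim => ->.
have Hmu' : forall K, mu_lo <= muK K by move=> K; case/andP: (Hmu K).
have Hcoer := @coer R d M Hm _ _ _ _ _ _ _ Hmu0 Hmu' Hlam Hiff Hth Hloc (ltW Hth0).
have HinHD := @inHD_PiFV R d M _ _ _ _ Hiff.
split.
  move=> _ HL2; exists Theta0; split => // uT.
  have := @alg R d%:R cD cK cL2 theta2 mu_lo (normT2 uT) (normD2 (PiFV PiFVs uT))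
    (sumGrad2 (PiFV PiFVs uT)) (Jfun (PiFV PiFVs uT)) (sumEps2 (PiFV PiFVs uT))
    (l2sq (PiFV PiFVs uT)) (bD muK lamK (PiFV PiFVs uT) (PiC (PiFV PiFVs uT))) 0
    Hd HcD HcK HcL2 (ltW Hth0) Hmu0 (@sumEps2_ge0 R d M Hm _) (@Jfun_ge0 R d M Hm _) (lexx 0)
    (@normT_le_normD R d M Hm _ (HinHD uT)) (HcDh _ (HinHD uT)) (HKorn uT).
  rewrite !mulr0 !addr0 => H; rewrite /Theta0; exact: H (HL2 uT) (Hcoer uT).
move=> Hnd HLq; exists Theta0; split => // uT.
set w := PiFV PiFVs uT.
set B := bD muK lamK w (PiC w).
set E := sumEps2 w; set J := Jfun w.
have HE : 0 <= E by exact: (@sumEps2_ge0 R d M Hm _).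
have HJ : 0 <= J by exact: (@Jfun_ge0 R d M Hm _).
have HC : 0 < cK * (1 + cL2) by apply: mulr_gt0 => //; lra.
have HTh : 0 < Theta0.
  rewrite /Theta0; apply: mulr_gt0.
    by apply: divr_gt0 => //; rewrite !mulr_gt0 //; lra.
  rewrite lt_min; apply/andP; split; first by rewrite mulr_gt0 //.
  by rewrite mul1r invr_gt0 ltr_pwDl // invr_ge0 ltW.
have Hk : 0 < d%:R * cD * cK by rewrite !mulr_gt0.
have key : forall (a : 'rV[R]_d) (W : 'M[R]_d), W^T = - W ->
   [/\ normD2 (subHD w (Rg a W)) <= cD * (sumGrad2 (subHD w (Rg a W)) + J),
       sumGrad2 (subHD w (Rg a W)) <= cK * (l2rig w a W + E + J),
       normT2 (urig a W uT) <= d%:R * normD2 (subHD w (Rg a W)) &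
       0 <= sumGrad2 (subHD w (Rg a W))].
  move=> a W HW.
  have E1 := PiFV_rig Hm muK lamK alpha PiFVs Hnd Hiff a W HW uT.
  have HinD := HinHD (urig a W uT); rewrite E1 in HinD.
  split.
  - by have := HcDh _ HinD; rewrite Jfun_rig.
  - have := HKorn (urig a W uT); rewrite E1.
    by rewrite (sumEps2_rig Hm a W HW) Jfun_rig l2sq_rig.
  - by have := @normT_le_normD R d M Hm _ HinD.
  - exact: sumGrad2_ge0.
pose S : set R := fun x => exists (a : 'rV[R]_d) (W : 'M[R]_d), W^T = - W /\ x = l2rig w a W.
have HinfS : has_inf S.
  split.
    exists (l2rig w 0 0); exists 0, 0; split => //; by rewrite trmx0 oppr0.
  exists (- (E + J)) => x [a [W [HW ->]]].
  have [_ H2 _ H4] := key a W HW.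
  have : 0 <= cK * (l2rig w a W + E + J) by apply: le_trans H4 H2.
  rewrite pmulr_rge0 // => H; lra.
apply/ler_addgt0Pr => e He.
set eps := e / (Theta0 * (d%:R * cD * cK)).
have Heps : 0 < eps by rewrite divr_gt0 // mulr_gt0.
have [x [a [W [HW ->]]] Hx] := inf_adherent Heps HinfS.
have [H1 H2 H3 H4] := key a W HW.
have HL : l2rig w a W <= cL2 * (E + J) + eps.
  by apply: le_trans (ltW Hx) _; rewrite lerD2r; exact: HLq.
have := @alg R d%:R cD cK cL2 theta2 mu_lo _ _ _ J E (l2rig w a W) B eps
    Hd HcD HcK HcL2 (ltW Hth0) Hmu0 HE HJ (ltW Heps) H3 H1 H2 HL (Hcoer uT).
rewrite -/Theta0 => H.
have HQ : normT2quot uT <= normT2 (urig a W uT).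
  apply: ge_inf.
    exists 0 => y [a' [W' [_ ->]]]; exact: normT2_ge0.
  by exists a, W.
apply: le_trans (ler_wpM2l (ltW HTh) HQ) _; apply: le_trans H _.
rewrite lerD2l /eps.
have -> : Theta0 * (d%:R * cD * cK * (e / (Theta0 * (d%:R * cD * cK)))) = e.
  by field; rewrite !gt_eqF.
by [].
Qed.
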